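(* Let $N\ge 2$, $1\le r<N$, and consider a single reversible reaction with stoichiometric vector $\sigma=(\sigma_1,\dots,\sigma_N)^{\rm T}=(-\alpha_1,\dots,-\alpha_r,\beta_{r+1},\dots,\beta_N)^{\rm T}$, where $\alpha_i>0$ for $i\le r$ and $\beta_i>0$ for $i>r$. Let $U_1,\dots,U_N\in\mathbb{R}$, $k_1^->0$, $\Delta t>0$. Let $c^0\in\mathbb{R}^N$ with $c^0_i>0$ for all $i$, set $c(R)=c^0+\sigma R$ for $R\in\mathbb{R}$, and let $R^n=0$. Let $\widehat R^{n+1}\in\mathbb{R}$ be any number with $c_i(\widehat R^{n+1})>0$ for all $i$ (for instance the solution of the first-order predictor scheme described in the context), put $\widehat R^{n+1/2}=\tfrac12(R^n+\widehat R^{n+1})$ and $\hat\eta=\eta(c(\widehat R^{n+1/2}))$. Then there exists a unique $R^{n+1}\in\mathbb{R}$ such that $c_i(R^{n+1})>0$ for all $i$, $R^{n+1}-R^n+\hat\eta\,\Delta t>0$, and $$\ln\Big(\frac{R^{n+1}-R^n}{\hat\eta\,\Delta t}+1\Big)=-\mu_R^{n+1/2},\qquad \mu_R^{n+1/2}=\phi(R^{n+1},R^n)+\Delta t\sum_{i=1}^N\sigma_i\big(\mu_i(R^{n+1})-\mu_i(R^n)\big).$$ Moreover, $R^{n+1}$ is the unique minimizer over $\{R: c_i(R)>0\ \forall i,\ R-R^n+\hat\eta\Delta t>0\}$ of the strictly convex function $$J_n(R)=(R-R^n+\hat\eta\Delta t)\ln\Big(\frac{R-R^n}{\hat\eta\Delta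 t}+1\Big)-(R-R^n)+\int_{R^n}^R\phi(s,R^n)\,ds+\Delta t\,F(R)-\gamma^n R,$$ where $\gamma^n=\Delta t\sum_{i=1}^N\sigma_i\mu_i(R^n)$.
   Context: For $R$ with $c_i(R)>0$ for all $i$, define the (pointwise) free energy $F(R)=\sum_{i=1}^N\big[c_i(R)(\ln c_i(R)-1)+c_i(R)U_i\big]$, the chemical potentials $\mu_i(R)=\ln c_i(R)+U_i$ (so $F'(R)=\sum_i\sigma_i\mu_i(R)$), and the mobility $\eta(c)=k_1^-\prod_{i=r+1}^N c_i^{\beta_i}$ for $c$ with positive components. The discrete variational derivative is $\phi(p,q)=\frac{F(p)-F(q)}{p-q}$ if $p\neq q$ and $\phi(p,p)=F'(p)$. A first-order predictor $\widehat R^{n+1}$ may be obtained by solving $\ln\big(\frac{\widehat R^{n+1}-R^n}{\eta(c(R^n))\Delta t}+1\big)=-\sum_{i=1}^N\sigma_i\mu_i(\widehat R^{n+1})$ with $c(\widehat R^{n+1})$ componentwise positive. *)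

(* Defs.v *)
From Stdlib Require Import Reals Lra Lia Arith.
From Coquelicot Require Import Coquelicot.
Open Scope R_scope.

(* Species are indexed 0-based: i = 0..N-1.  Reactants are i < r, products r <= i < N. *)

Fixpoint sum_from (m k : nat) (f : nat -> R) : R :=
  match k with
  | O => 0
  | S k' => f m + sum_from (S m) k' f
  end.

Fixpoint prod_from (m k : nat) (f : nat -> R) : R :=
  match k with
  | O => 1
  | S k' => f m * prod_from (S m) k' f
  end.

(* \sum_{i=1}^N in the paper, i.e. 0 <= i < N here *)
Definition sumN (N : nat) (f : nat -> R) : R := sum_from 0 N f.

Definition stoich (r : nat) (alpha beta : nat -> R) (i : nat) : R :=
  if (i <? r)%nat then - alpha i else beta i.

Definition conc (c0 sigma : nat -> R) (x : R) (i : nat) : R := c0 i + sigma i * x.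

Definition Fen (N : nat) (c0 sigma U : nat -> R) (x : R) : R :=
  sumN N (fun i => conc c0 sigma x i * (ln (conc c0 sigma x i) - 1)
                   + conc c0 sigma x i * U i).

Definition chem (c0 sigma U : nat -> R) (x : R) (i : nat) : R :=
  ln (conc c0 sigma x i) + U i.

Definition dFen (N : nat) (c0 sigma U : nat -> R) (x : R) : R :=
  sumN N (fun i => sigma i * chem c0 sigma U x i).

(* mobility eta(c) = k1^- prod_{i=r+1}^N c_i^{beta_i} (0-based: r <= i < N) *)
Definition mobility (N r : nat) (k1m : R) (beta : nat -> R) (c : nat -> R) : R :=
  k1m * prod_from r (N - r) (fun i => Rpower (c i) (beta i)).

Definition phi (N : nat) (c0 sigma U : nat -> R) (p q : R) : R :=
  if Req_EM_T p q then dFen N c0 sigma U p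
  else (Fen N c0 sigma U p - Fen N c0 sigma U q) / (p - q).

Definition strictly_convex_on (D : R -> Prop) (f : R -> R) : Prop :=
  forall x y t, D x -> D y -> x <> y -> 0 < t < 1 ->
    f (t * x + (1 - t) * y) < t * f x + (1 - t) * f y.

(* Main.v *)
Require Import Defs.
From Stdlib Require Import Reals Lra Lia.
From Coquelicot Require Import Coquelicot.
Open Scope R_scope.

Lemma mvt_J (J G : R -> R) (a b x y : R) :
  (forall z, a<z<b -> is_derive J z (G z)) -> a < x -> x < y -> y < b ->
  exists c, J y - J x = G c * (y - x) /\ x < c < y.
Proof.
  intros HJ ax xy yb. apply MVT_cor2; auto.
  intros c Hc. apply is_derive_Reals. apply HJ. lra.
Qed.

Lemma abstract_main (a b : R) (J G : R -> R)
  (HJ : forall x, a<x<b -> is_derive J x (G x))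
  (HGc : forall x, a<x<b -> continuous G x)
  (HGm : forall x y, a<x -> x<y -> y<b -> G x < G y)
  (x1 x2 : R) (H1 : a<x1<b) (H2 : a<x2<b) (G1 : G x1 < 0) (G2 : 0 < G x2) :
  (exists R1, a<R1<b /\ G R1 = 0)
  /\ (forall R1 R2, a<R1<b -> a<R2<b -> G R1 = 0 -> G R2 = 0 -> R1 = R2)
  /\ (forall R1 R, a<R1<b -> G R1 = 0 -> a<R<b -> R<>R1 -> J R1 < J R)
  /\ (forall x y t, a<x<b -> a<y<b -> x<>y -> 0<t<1 ->
        J (t*x+(1-t)*y) < t * J x + (1-t) * J y).
Proof.
  assert (Hmono : forall x y, a<x<b -> a<y<b -> x<=y -> G x <= G y).
  { intros x y Hx Hy Hxy. destruct (Req_dec x y). subst; lra.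
    left; apply HGm; lra. }
  split; [|split; [|split]].
  - assert (x1 < x2).
    { destruct (Rlt_or_le x1 x2); auto. pose proof (Hmono x2 x1 H2 H1 H). lra. }
    destruct (Ranalysis5.IVT_interv G x1 x2) as [z [Hz1 Hz2]]; auto.
    + intros z Hz. apply continuity_pt_filterlim. apply HGc. lra.
    + exists z. split; auto. lra.
  - intros R1 R2 HR1 HR2 G1' G2'.
    destruct (Rtotal_order R1 R2) as [h|[h|h]]; auto.
    + pose proof (HGm R1 R2 ltac:(lra) h ltac:(lra)). lra.
    + pose proof (HGm R2 R1 ltac:(lra) h ltac:(lra)). lra.
  - intros R1 R HR1 G0 HR Hne.
    destruct (Rtotal_order R1 R) as [h|[h|h]]; [|congruence|].
    + destruct (mvt_J J G a b R1 R HJ ltac:(lra) h ltac:(lra)) as [c [Hc1 Hc2]].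
      pose proof (HGm R1 c ltac:(lra) ltac:(lra) ltac:(lra)).
      assert (0 < G c * (R - R1)) by (apply Rmult_lt_0_compat; lra). lra.
    + destruct (mvt_J J G a b R R1 HJ ltac:(lra) h ltac:(lra)) as [c [Hc1 Hc2]].
      pose proof (HGm c R1 ltac:(lra) ltac:(lra) ltac:(lra)).
      assert (0 < - G c * (R1 - R)) by (apply Rmult_lt_0_compat; lra). lra.
  - assert (key : forall x y t, a<x -> x<y -> y<b -> 0<t<1 ->
        J (t*x+(1-t)*y) < t * J x + (1-t) * J y).
    { intros x y t ax xy yb Ht.
      set (z := t*x+(1-t)*y).
      assert (x < z) by (unfold z; nra). assert (z < y) by (unfold z; nra).
      destruct (mvt_J J G a b x z HJ ax H ltac:(lra)) as [c1 [E1 C1]].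
      destruct (mvt_J J G a b z y HJ ltac:(lra) H0 yb) as [c2 [E2 C2]].
      pose proof (HGm c1 c2 ltac:(lra) ltac:(lra) ltac:(lra)).
      assert (Ez1 : z - x = (1-t)*(y-x)) by (unfold z; ring).
      assert (Ez2 : y - z = t*(y-x)) by (unfold z; ring).
      rewrite Ez1 in E1. rewrite Ez2 in E2.
      assert (0 < t*(1-t)*(y-x)*(G c2 - G c1)).
      { apply Rmult_lt_0_compat; [|lra]. apply Rmult_lt_0_compat; [|lra]. nra. }
      nra. }
    intros x y t Hx Hy Hne Ht.
    destruct (Rtotal_order x y) as [h|[h|h]]; [| congruence |].
    + apply key; lra.
    + replace (t*x+(1-t)*y) with ((1-t)*y + (1-(1-t))*x) by ring.
      replace (t * J x + (1-t) * J y) with ((1-t) * J y + (1-(1-t)) * J x) by ring.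
      apply key; lra.
Qed.
Section Slope.
Variables (a b : R) (f f' S : R -> R).
Hypothesis Hd : forall x, a<x<b -> is_derive f x (f' x).
Hypothesis Hm : forall x y, a<x -> x<y -> y<b -> f' x < f' y.
Hypothesis Ha : a < 0. Hypothesis Hb : 0 < b.
Hypothesis HS0 : S 0 = f' 0.
Hypothesis HS : forall s, s <> 0 -> S s = (f s - f 0) / (s - 0).

Lemma ball_R (x : R) (e : posreal) y : ball x e y -> Rabs (y - x) < e.
Proof. unfold ball; simpl; unfold AbsRing_ball, abs, minus, plus, opp; simpl; auto. Qed.

Lemma slope_left x z : a < x -> x < z -> z < b -> (f z - f x)/(z - x) < f' z.
Proof.
  intros. destruct (mvt_J f f' a b x z Hd) as [c [E C]]; try lra.
  rewrite E. replace (f' c * (z - x) / (z - x)) with (f' c) by (field; lra).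
  apply Hm; lra.
Qed.
Lemma slope_right z y : a < z -> z < y -> y < b -> f' z < (f y - f z)/(y - z).
Proof.
  intros. destruct (mvt_J f f' a b z y Hd) as [c [E C]]; try lra.
  rewrite E. replace (f' c * (y - z) / (y - z)) with (f' c) by (field; lra).
  apply Hm; lra.
Qed.

Lemma S_pos s : 0 < s -> s < b -> f' 0 < S s.
Proof. intros. rewrite HS by lra. apply slope_right; lra. Qed.
Lemma S_neg s : a < s -> s < 0 -> S s < f' 0.
Proof. intros. rewrite HS by lra.
  replace ((f s - f 0)/(s - 0)) with ((f 0 - f s)/(0 - s)) by (field; lra).
  apply slope_left; lra. Qed.

Lemma avg_lt x z y : x < z -> z < y ->
  (f z - f x)/(z-x) < (f y - f z)/(y-z) ->
  (f z - f x)/(z-x) < (f y - f x)/(y-x) /\ (f y - f x)/(y-x) < (f y - f z)/(y-z).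
Proof.
  intros. set (p := (f z - f x)/(z-x)) in *. set (q := (f y - f z)/(y-z)) in *.
  assert (Ep : f z - f x = p * (z - x)) by (unfold p; field; lra).
  assert (Eq : f y - f z = q * (y - z)) by (unfold q; field; lra).
  replace (f y - f x) with (p*(z-x) + q*(y-z)) by lra.
  split.
  - apply Rmult_lt_reg_r with (y - x); [lra|].
    replace ((p * (z - x) + q * (y - z)) / (y - x) * (y - x)) with (p * (z - x) + q * (y - z)) by (field; lra).
    nra.
  - apply Rmult_lt_reg_r with (y - x); [lra|].
    replace ((p * (z - x) + q * (y - z)) / (y - x) * (y - x)) with (p * (z - x) + q * (y - z)) by (field; lra).
    nra.
Qed.

Lemma S_mono x y : a < x -> x < y -> y < b -> S x < S y.
Proof.
  intros ax xy yb.
  destruct (Rtotal_order x 0) as [hx|[hx|hx]].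
  - destruct (Rtotal_order y 0) as [hy|[hy|hy]].
    + rewrite !HS by lra.
      replace ((f x - f 0)/(x - 0)) with ((f 0 - f x)/(0 - x)) by (field; lra).
      replace ((f y - f 0)/(y - 0)) with ((f 0 - f y)/(0 - y)) by (field; lra).
      assert (h1 := slope_left x y ax xy ltac:(lra)).
      assert (h2 := slope_right y 0 ltac:(lra) hy ltac:(lra)).
      destruct (avg_lt x y 0 xy hy ltac:(lra)). lra.
    + subst. rewrite HS0. apply S_neg; lra.
    + pose proof (S_neg x ax hx). pose proof (S_pos y hy yb). lra.
  - subst. rewrite HS0. apply S_pos; lra.
  - rewrite !HS by lra.
    assert (h1 := slope_left 0 x ltac:(lra) hx ltac:(lra)).
    assert (h2 := slope_right x y ltac:(lra) xy yb).
    destruct (avg_lt 0 x y hx xy ltac:(lra)). lra.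
Qed.

Lemma S_cont s : a < s -> s < b -> continuous S s.
Proof.
  intros as_ sb.
  destruct (Req_dec s 0) as [->|hs].
  - apply continuity_pt_filterlim.
    intros eps Heps.
    assert (Hd0 := proj1 (is_derive_Reals f 0 (f' 0)) (Hd 0 ltac:(lra))).
    destruct (Hd0 eps Heps) as [del Hdel].
    exists del. split; [apply cond_pos|].
    intros x [[_ Hx0] Hx]. unfold R_dist in *. simpl in *. unfold R_dist.
    rewrite HS0, HS by auto.
    replace x with (0 + x) at 1 by ring. replace (x - 0) with x by ring.
    apply Hdel; auto. revert Hx; simpl; unfold R_dist; rewrite Rminus_0_r; auto.
  - apply (@continuous_ext_loc R_UniformSpace R_UniformSpace S (fun y : R => (f y - f 0)/(y - 0)) s).
    + assert (0 < Rabs s) by (apply Rabs_pos_lt; auto).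
      unfold locally. exists (mkposreal (Rabs s) H). intros y Hy. simpl in Hy.
      rewrite HS; auto. intro; subst.
      unfold ball in Hy; simpl in Hy; unfold AbsRing_ball, abs, minus, plus, opp in Hy; simpl in Hy.
      rewrite Rplus_0_l, Rabs_Ropp in Hy. lra.
    + apply (@ex_derive_continuous R_AbsRing R_NormedModule). auto_derive. split.
      * exists (f' s). apply Hd; lra.
      * split; auto. lra.
Qed.
End Slope.
Lemma sum_from_ext m k f g : (forall i, (m <= i < m + k)%nat -> f i = g i) ->
  sum_from m k f = sum_from m k g.
Proof.
  revert m; induction k; intros m H; simpl; auto.
  rewrite H by lia. f_equal. apply IHk. intros; apply H; lia.
Qed.
Lemma sum_from_minus m k f g :
  sum_from m k (fun i => f i - g i) = sum_from m k f - sum_from m k g.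
Proof. revert m; induction k; intros m; simpl; [ring|]. rewrite IHk; ring. Qed.
Lemma sum_from_lt m k f g : (0 < k)%nat -> (forall i, (m <= i < m + k)%nat -> f i < g i) ->
  sum_from m k f < sum_from m k g.
Proof.
  revert m; induction k; intros m Hk H; [lia|]. simpl.
  destruct k. simpl. specialize (H m ltac:(lia)). lra.
  assert (sum_from (S m) (S k) f < sum_from (S m) (S k) g) by (apply IHk; [lia|intros; apply H; lia]).
  specialize (H m ltac:(lia)). lra.
Qed.
Lemma sum_from_ge_term m k f j : (forall i, (m <= i < m + k)%nat -> 0 <= f i) ->
  (m <= j < m + k)%nat -> f j <= sum_from m k f.
Proof.
  revert m; induction k; intros m H Hj; [lia|]. simpl.
  assert (0 <= sum_from (S m) k f).
  { clear IHk Hj. revert m H. induction k; intros m H; simpl; [lra|].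
    pose proof (H (S m) ltac:(lia)). pose proof (IHk (S m) ltac:(intros; apply H; lia)). lra. }
  destruct (Nat.eq_dec j m). subst. pose proof (H m ltac:(lia)). lra.
  pose proof (H m ltac:(lia)). pose proof (IHk (S m) ltac:(intros; apply H; lia) ltac:(lia)). lra.
Qed.
Lemma sum_from_derive m k (f f' : R -> nat -> R) x :
  (forall i, (m <= i < m + k)%nat -> is_derive (fun y => f y i) x (f' x i)) ->
  is_derive (fun y => sum_from m k (f y)) x (sum_from m k (f' x)).
Proof.
  revert m; induction k; intros m H; simpl.
  - apply (is_derive_const (K:=R_AbsRing) (V:=R_NormedModule)).
  - apply (is_derive_plus (K:=R_AbsRing) (V:=R_NormedModule) (fun y => f y m) (fun y => sum_from (S m) k (f y))).
    + apply H; lia.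
    + apply IHk. intros; apply H; lia.
Qed.
Lemma prod_from_pos m k f : (forall i, 0 < f i) -> 0 < prod_from m k f.
Proof. revert m; induction k; intros m H; simpl; [lra|]. apply Rmult_lt_0_compat; auto. Qed.

Lemma argmin m k (h : nat -> R) : (0 < k)%nat ->
  exists j, (m <= j < m + k)%nat /\ forall i, (m <= i < m + k)%nat -> h j <= h i.
Proof.
  revert m; induction k; intros m Hk; [lia|].
  destruct k.
  - exists m. split; [lia|]. intros i Hi. assert (i = m) by lia. subst; lra.
  - destruct (IHk (S m) ltac:(lia)) as [j [Hj Hm]].
    destruct (Rle_or_lt (h m) (h j)).
    + exists m. split; [lia|]. intros i Hi. destruct (Nat.eq_dec i m); [subst; lra|].
      pose proof (Hm i ltac:(lia)). lra.
    + exists j. split; [lia|]. intros i Hi. destruct (Nat.eq_dec i m); [subst; lra|].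
      apply Hm; lia.
Qed.

Lemma Fen_derive N c0 sigma U x : (forall i, (i < N)%nat -> 0 < conc c0 sigma x i) ->
  is_derive (Fen N c0 sigma U) x (dFen N c0 sigma U x).
Proof.
  intros H. unfold Fen, dFen, sumN.
  apply (sum_from_derive 0 N (fun y i => conc c0 sigma y i * (ln (conc c0 sigma y i) - 1) + conc c0 sigma y i * U i)
     (fun y i => sigma i * chem c0 sigma U y i)).
  intros i Hi. specialize (H i ltac:(lia)). unfold conc, chem in *.
  auto_derive; [lra|]. unfold conc. field. lra.
Qed.

Lemma dFen_derive N c0 sigma U x : (forall i, (i < N)%nat -> 0 < conc c0 sigma x i) ->
  ex_derive (dFen N c0 sigma U) x.
Proof.
  intros H. unfold dFen, sumN.
  eexists. apply (sum_from_derive 0 N (fun y i => sigma i * chem c0 sigma U y i)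
     (fun y i => sigma i * (sigma i / conc c0 sigma y i))).
  intros i Hi. specialize (H i ltac:(lia)). unfold conc, chem in *.
  cbv beta. unfold conc. auto_derive; [lra|]. unfold conc. field. lra.
Qed.

Lemma term_strict c0 sigma U i x y : sigma i <> 0 -> x < y ->
  0 < conc c0 sigma x i -> 0 < conc c0 sigma y i ->
  sigma i * chem c0 sigma U x i < sigma i * chem c0 sigma U y i.
Proof.
  intros Hs xy Hx Hy. unfold chem. unfold conc in *.
  destruct (Rlt_or_le 0 (sigma i)).
  - assert (ln (c0 i + sigma i * x) < ln (c0 i + sigma i * y)) by (apply ln_increasing; nra).
    nra.
  - assert (sigma i < 0) by lra.
    assert (ln (c0 i + sigma i * y) < ln (c0 i + sigma i * x)) by (apply ln_increasing; nra).
    nra.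
Qed.

Lemma dFen_strict N c0 sigma U x y : (0 < N)%nat -> (forall i, (i < N)%nat -> sigma i <> 0) -> x < y ->
  (forall i, (i < N)%nat -> 0 < conc c0 sigma x i) ->
  (forall i, (i < N)%nat -> 0 < conc c0 sigma y i) ->
  dFen N c0 sigma U x < dFen N c0 sigma U y.
Proof.
  intros HN Hs xy Hx Hy. unfold dFen, sumN. apply sum_from_lt; auto.
  intros i Hi. apply term_strict; auto; [apply Hs|apply Hx|apply Hy]; lia.
Qed.

Lemma lt_div x p q : 0 < q -> x < p / q -> q * x < p.
Proof. intros. replace p with (p / q * q) by (field; lra). nra. Qed.
Lemma div_lt x p q : 0 < q -> q * x < p -> x < p / q.
Proof. intros. apply Rmult_lt_reg_l with q; auto. replace (q * (p/q)) with p by (field; lra). lra. Qed.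
Lemma div_gt x p q : 0 < q -> p < q * x -> p / q < x.
Proof. intros. apply Rmult_lt_reg_l with q; auto. replace (q * (p/q)) with p by (field; lra). lra. Qed.
Lemma div_le_mul p q p' q' : 0 < q -> 0 < q' -> p / q <= p' / q' -> q' * p <= q * p'.
Proof. intros. assert (p = p/q*q) by (field; lra). assert (p' = p'/q'*q') by (field; lra).
  rewrite H2, H3. assert (0 < q*q') by nra. nra. Qed.

Theorem theorem3p1
  (N r : nat) (alpha beta U c0 : nat -> R) (k1m dt Rn Rhat : R)
  (HN : (2 <= N)%nat) (Hr1 : (1 <= r)%nat) (HrN : (r < N)%nat)
  (Halpha : forall i, (i < r)%nat -> 0 < alpha i)
  (Hbeta : forall i, (r <= i < N)%nat -> 0 < beta i)
  (Hk : 0 < k1m) (Hdt : 0 < dt)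
  (Hc0 : forall i, (i < N)%nat -> 0 < c0 i)
  (HRn : Rn = 0)
  (HRhat : forall i, (i < N)%nat -> 0 < conc c0 (stoich r alpha beta) Rhat i) :
  let sigma := stoich r alpha beta in
  let c := conc c0 sigma in
  let F := Fen N c0 sigma U in
  let mu := chem c0 sigma U in
  let ph := phi N c0 sigma U in
  let Rhalf := (Rn + Rhat) / 2 in
  let etahat := mobility N r k1m beta (c Rhalf) in
  let gamma := dt * sumN N (fun i => sigma i * mu Rn i) in
  let D := fun R => (forall i, (i < N)%nat -> 0 < c R i) /\ R - Rn + etahat * dt > 0 in
  let scheme := fun R =>
    D R /\
    ln ((R - Rn) / (etahat * dt) + 1)
      = - (ph R Rn + dt * sumN N (fun i => sigma i * (mu R i - mu Rn i))) in
  let J := fun R =>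
    (R - Rn + etahat * dt) * ln ((R - Rn) / (etahat * dt) + 1) - (R - Rn)
    + RInt (fun s => ph s Rn) Rn R + dt * F R - gamma * R in
  (exists R1, scheme R1 /\ (forall R', scheme R' -> R' = R1)
              /\ D R1 /\ (forall R, D R -> R <> R1 -> J R1 < J R))
  /\ strictly_convex_on D J.
Proof.
  intros sigma c F mu ph Rhalf etahat gamma D scheme J.
  subst Rn.
  assert (Hsr : forall i, (i < r)%nat -> sigma i = - alpha i).
  { intros i Hi. unfold sigma, stoich. destruct (Nat.ltb_spec i r); [auto|lia]. }
  assert (Hsp : forall i, (r <= i)%nat -> sigma i = beta i).
  { intros i Hi. unfold sigma, stoich. destruct (Nat.ltb_spec i r); [lia|auto]. }
  assert (Hs0 : forall i, (i < N)%nat -> sigma i <> 0).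
  { intros i Hi. destruct (Nat.lt_ge_cases i r).
    - rewrite Hsr by auto. specialize (Halpha i H). lra.
    - rewrite Hsp by auto. specialize (Hbeta i ltac:(lia)). lra. }
  assert (Heta : 0 < etahat).
  { unfold etahat, mobility. apply Rmult_lt_0_compat; auto.
    apply prod_from_pos. intros; unfold Rpower; apply exp_pos. }
  set (E := etahat * dt) in *.
  assert (HE : 0 < E) by (unfold E; nra).
  destruct (argmin 0 r (fun i => c0 i / alpha i) ltac:(lia)) as [j [Hj Hjm]].
  destruct (argmin r (N - r) (fun i => c0 i / beta i) ltac:(lia)) as [k [Hkk Hkm]].
  simpl in Hjm, Hj.
  replace (r + (N - r))%nat with N in Hkm, Hkk by lia.
  set (b := c0 j / alpha j).
  set (a := Rmax (-E) (- (c0 k / beta k))).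
  assert (Haj := Halpha j ltac:(lia)). assert (Hbk := Hbeta k ltac:(lia)).
  assert (Hc0j := Hc0 j ltac:(lia)). assert (Hc0k := Hc0 k ltac:(lia)).
  assert (Hb : 0 < b) by (unfold b; apply Rdiv_lt_0_compat; auto).
  assert (Ha : a < 0).
  { unfold a; apply Rmax_lub_lt; [lra|]. assert (0 < c0 k / beta k) by (apply Rdiv_lt_0_compat; auto). lra. }
  assert (HD : forall R, D R <-> a < R < b).
  { intros R. unfold D, c, conc. split.
    - intros [H1 H2]. split.
      + unfold a. apply Rmax_lub_lt; [lra|].
        specialize (H1 k ltac:(lia)). rewrite Hsp in H1 by lia.
        assert (R > - c0 k / beta k).
        { apply Rlt_gt. replace (- c0 k / beta k) with ((- c0 k)/ beta k) by (field; lra).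
          apply div_gt; auto. lra. }
        replace (- (c0 k / beta k)) with (- c0 k / beta k) by (field; lra). lra.
      + specialize (H1 j ltac:(lia)). rewrite Hsr in H1 by lia.
        unfold b. apply div_lt; auto. lra.
    - intros [H1 H2]. split.
      + intros i Hi. destruct (Nat.lt_ge_cases i r).
        * rewrite Hsr by auto. specialize (Hjm i ltac:(lia)). specialize (Halpha i H).
          assert (R < c0 i / alpha i) by (unfold b in H2; lra).
          pose proof (lt_div R (c0 i) (alpha i) Halpha H0). lra.
        * rewrite Hsp by auto. specialize (Hkm i ltac:(lia)). specialize (Hbeta i ltac:(lia)).
          assert (- (c0 k / beta k) < R) by (unfold a in H1; eapply Rle_lt_trans; [apply Rmax_r|exact H1]).
          assert (- (c0 i / beta i) < R) by lra.
          assert (- R < c0 i / beta i) by lra.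
          pose proof (lt_div (-R) (c0 i) (beta i) Hbeta H4). lra.
      + assert (-E < R) by (unfold a in H1; eapply Rle_lt_trans; [apply Rmax_l|exact H1]). lra. }
  assert (HDc : forall R, a < R < b -> forall i, (i < N)%nat -> 0 < conc c0 sigma R i).
  { intros R HR. apply HD in HR. apply HR. }
  set (dF := dFen N c0 sigma U).
  assert (Hd : forall x, a < x < b -> is_derive F x (dF x)).
  { intros x Hx. apply Fen_derive. apply HDc; auto. }
  assert (Hm : forall x y, a < x -> x < y -> y < b -> dF x < dF y).
  { intros x y ax xy yb. apply dFen_strict; auto; [lia| apply HDc; lra | apply HDc; lra]. }
  set (S := fun s => ph s 0).
  assert (HS0 : S 0 = dF 0).
  { unfold S, ph, phi. destruct (Req_EM_T 0 0); [reflexivity|congruence]. }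
  assert (HS : forall s, s <> 0 -> S s = (F s - F 0) / (s - 0)).
  { intros s hs. unfold S, ph, phi. destruct (Req_EM_T s 0); [congruence|reflexivity]. }
  assert (Hgam : gamma = dt * dF 0) by reflexivity.
  set (G := fun R => ln ((R - 0) / E + 1) + S R + dt * dF R - gamma).
  assert (Hsch : forall R, scheme R <-> (a < R < b /\ G R = 0)).
  { intros R. unfold scheme. rewrite HD.
    assert (Hsum : sumN N (fun i => sigma i * (mu R i - mu 0 i)) = dF R - dF 0).
    { unfold dF, dFen, sumN. rewrite <- sum_from_minus. apply sum_from_ext.
      intros; unfold mu; ring. }
    rewrite Hsum. unfold G. fold (S R). rewrite Hgam. split; intros [H1 H2]; split; auto; lra. }
  assert (HSc : forall x, a < x < b -> continuous S x).
  { intros x Hx. eapply S_cont; eauto; lra. }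
  assert (HaE : -E <= a) by (unfold a; apply Rmax_l).
  assert (HJ : forall x, a < x < b -> is_derive J x (G x)).
  { intros x Hx. unfold J. auto_derive.
    - split; [|split; [|split; [|split]]]; auto.
      + replace ((x + - 0) * / E + 1) with ((x + E) / E) by (field; lra).
        apply Rdiv_lt_0_compat; lra.
      + apply (ex_RInt_continuous (V:=R_CompleteNormedModule)). intros z Hz. apply HSc.
        assert (Rmin 0 x <= z <= Rmax 0 x) by auto.
        assert (a < Rmin 0 x) by (apply Rmin_glb_lt; lra).
        assert (Rmax 0 x < b) by (apply Rmax_lub_lt; lra). lra.
      + assert (Hp : 0 < Rmin (x - a) (b - x)) by (apply Rmin_pos; lra).
        exists (mkposreal _ Hp). intros y Hy. apply ball_R in Hy. simpl in Hy.
        apply continuity_pt_filterlim. apply HSc.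
        assert (Rmin (x - a) (b - x) <= x - a) by apply Rmin_l.
        assert (Rmin (x - a) (b - x) <= b - x) by apply Rmin_r.
        apply Rabs_def2 in Hy. lra.
      + exists (dF x). apply Hd; auto.
    - replace (Derive (fun x0 => F x0) x) with (dF x) by (symmetry; apply is_derive_unique; apply Hd; auto).
      replace ((x + - 0) * / E + 1) with ((x - 0) / E + 1) by (unfold Rdiv, Rminus; ring).
      assert (0 < (x - 0) / E + 1).
      { replace ((x - 0) / E + 1) with ((x + E) / E) by (field; lra). apply Rdiv_lt_0_compat; lra. }
      unfold G, S. field. split; lra. }
  assert (HGc : forall x, a < x < b -> continuous G x).
  { intros x Hx.
    apply (continuous_ext (fun y => plus (S y) (ln ((y-0)/E+1) + dt*dF y - gamma)) G x).
    { intros y. unfold G, plus; simpl. ring. }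
    apply (@continuous_plus R_UniformSpace R_AbsRing R_NormedModule).
    - apply HSc; auto.
    - apply (@ex_derive_continuous R_AbsRing R_NormedModule). auto_derive.
      split; [|split; auto].
      + replace ((x + - 0) * / E + 1) with ((x + E) / E) by (field; lra).
        apply Rdiv_lt_0_compat; lra.
      + apply dFen_derive. apply HDc; auto. }
  assert (HGm : forall x y, a < x -> x < y -> y < b -> G x < G y).
  { intros x y ax xy yb. unfold G.
    assert (ln ((x - 0) / E + 1) < ln ((y - 0) / E + 1)).
    { apply ln_increasing.
      - replace ((x - 0) / E + 1) with ((x + E) / E) by (field; lra).
        apply Rdiv_lt_0_compat; lra.
      - apply Rplus_lt_compat_r. unfold Rdiv. apply Rmult_lt_compat_r.
        apply Rinv_0_lt_compat; auto. lra. }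
    assert (S x < S y) by (apply (S_mono a b F dF S); auto).
    assert (dF x < dF y) by (apply Hm; auto).
    assert (dt * dF x < dt * dF y) by (apply Rmult_lt_compat_l; auto).
    lra. }
  set (d := dF 0).
  assert (Habs : - Rabs d <= d /\ d <= Rabs d).
  { split; [|apply Rle_abs]. pose proof (Rle_abs (-d)). rewrite Rabs_Ropp in H. lra. }
  assert (Hdiff : forall x, dF x - dF 0 =
     sum_from 0 N (fun i => sigma i * chem c0 sigma U x i - sigma i * chem c0 sigma U 0 i)).
  { intros x. unfold dF, dFen, sumN. rewrite sum_from_minus. reflexivity. }
  assert (Hc00 : forall i, conc c0 sigma 0 i = c0 i) by (intros; unfold conc; ring).
  assert (Hx2 : exists x2, a < x2 < b /\ 0 < G x2).
  { set (K := (Rabs d + 1) / (dt * alpha j)).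
    assert (HK : 0 < K) by (unfold K; apply Rdiv_lt_0_compat; [lra| nra]).
    set (eps := c0 j * exp (- K)).
    assert (He1 : exp (-K) < 1) by (rewrite <- exp_0; apply exp_increasing; lra).
    assert (He0 : 0 < exp (-K)) by apply exp_pos.
    assert (Heps : 0 < eps < c0 j) by (unfold eps; split; nra).
    set (x2 := (c0 j - eps) / alpha j).
    assert (Hx2 : 0 < x2 < b).
    { unfold x2, b. split. apply Rdiv_lt_0_compat; lra.
      unfold Rdiv. apply Rmult_lt_compat_r. apply Rinv_0_lt_compat; auto. lra. }
    exists x2. split; [lra|].
    assert (Hcj : conc c0 sigma x2 j = eps).
    { unfold conc. rewrite Hsr by lia. unfold x2. field. lra. }
    assert (Hln : ln eps = ln (c0 j) - K).
    { unfold eps. rewrite ln_mult, ln_exp; auto; lra. }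
    assert (Hterm : sigma j * chem c0 sigma U x2 j - sigma j * chem c0 sigma U 0 j = dt * alpha j * K / dt).
    { unfold chem. rewrite Hcj, Hc00, Hln, Hsr by lia. field. lra. }
    assert (Hsum : dt * alpha j * K / dt <= dF x2 - dF 0).
    { rewrite Hdiff, <- Hterm. apply (sum_from_ge_term 0 N (fun i => sigma i * chem c0 sigma U x2 i - sigma i * chem c0 sigma U 0 i) j).
      - intros i Hi. assert (sigma i * chem c0 sigma U 0 i < sigma i * chem c0 sigma U x2 i).
        { apply term_strict; [apply Hs0; lia| lra | apply HDc; [lra|lia] | apply HDc; [lra|lia]]. }
        lra.
      - lia. }
    assert (HdK : dt * alpha j * K = Rabs d + 1) by (unfold K; field; split; lra).
    assert (dt * alpha j * K / dt = (Rabs d + 1) / dt) by (rewrite HdK; reflexivity).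
    assert (dt * (dF x2 - dF 0) >= Rabs d + 1).
    { rewrite H in Hsum. apply Rle_ge.
      replace (Rabs d + 1) with (dt * ((Rabs d + 1) / dt)) by (field; lra).
      apply Rmult_le_compat_l; lra. }
    assert (S x2 > d) by (apply (S_pos a b F dF S); auto; lra).
    assert (0 < ln ((x2 - 0) / E + 1)).
    { assert (0 < (x2 - 0) / E) by (apply Rdiv_lt_0_compat; lra).
      assert (Hl1 : ln 1 < ln ((x2 - 0) / E + 1)) by (apply ln_increasing; lra).
      rewrite ln_1 in Hl1. lra. }
    unfold G. rewrite Hgam. fold d. change (dF 0) with d in H0. lra. }
  assert (Hx1 : exists x1, a < x1 < b /\ G x1 < 0).
  { destruct (Rle_lt_dec (- (c0 k / beta k)) (-E)) as [hc|hc].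
    - assert (Hae : a = -E) by (unfold a; apply Rmax_left; auto).
      set (eps := exp (- (Rabs d + 1))).
      assert (He1 : eps < 1).
      { assert (exp (- (Rabs d + 1)) < exp 0) by (apply exp_increasing; pose proof (Rabs_pos d); lra).
        rewrite exp_0 in H. exact H. }
      assert (He0 : 0 < eps) by apply exp_pos.
      set (x1 := E * (eps - 1)).
      assert (Hx1 : a < x1 < 0) by (unfold x1; rewrite Hae; split; nra).
      exists x1. split; [lra|].
      assert (Hl : ln ((x1 - 0) / E + 1) = - (Rabs d + 1)).
      { replace ((x1 - 0) / E + 1) with eps by (unfold x1; field; lra).
        unfold eps. apply ln_exp. }
      assert (S x1 < d) by (apply (S_neg a b F dF S); auto; lra).
      assert (dF x1 < dF 0) by (apply Hm; lra).
      assert (dt * dF x1 < dt * dF 0) by (apply Rmult_lt_compat_l; auto).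
      unfold G. rewrite Hgam, Hl. fold d. change (dF 0) with d in H1. lra.
    - assert (Hae : a = - (c0 k / beta k)) by (unfold a; apply Rmax_right; lra).
      set (K := (Rabs d + 1) / (dt * beta k)).
      assert (HK : 0 < K) by (unfold K; apply Rdiv_lt_0_compat; [lra| nra]).
      set (eps := c0 k * exp (- K)).
      assert (He1 : exp (-K) < 1) by (rewrite <- exp_0; apply exp_increasing; lra).
      assert (He0 : 0 < exp (-K)) by apply exp_pos.
      assert (Heps : 0 < eps < c0 k) by (unfold eps; split; nra).
      set (x1 := (eps - c0 k) / beta k).
      assert (Hx1 : a < x1 < 0).
      { rewrite Hae. unfold x1. split.
        - replace (- (c0 k / beta k)) with ((0 - c0 k) / beta k) by (field; lra).
          unfold Rdiv. apply Rmult_lt_compat_r. apply Rinv_0_lt_compat; auto. lra.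
        - replace ((eps - c0 k) / beta k) with (- ((c0 k - eps) / beta k)) by (field; lra).
          assert (0 < (c0 k - eps) / beta k) by (apply Rdiv_lt_0_compat; lra). lra. }
      exists x1. split; [lra|].
      assert (Hck : conc c0 sigma x1 k = eps).
      { unfold conc. rewrite Hsp by lia. unfold x1. field. lra. }
      assert (Hln : ln eps = ln (c0 k) - K).
      { unfold eps. rewrite ln_mult, ln_exp; auto; lra. }
      assert (Hterm : sigma k * chem c0 sigma U 0 k - sigma k * chem c0 sigma U x1 k = dt * beta k * K / dt).
      { unfold chem. rewrite Hck, Hc00, Hln, Hsp by lia. field. lra. }
      assert (Hsum : dt * beta k * K / dt <= dF 0 - dF x1).
      { replace (dF 0 - dF x1) with (- (dF x1 - dF 0)) by ring.
        rewrite Hdiff. rewrite <- Hterm.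
        replace (- sum_from 0 N (fun i => sigma i * chem c0 sigma U x1 i - sigma i * chem c0 sigma U 0 i))
          with (sum_from 0 N (fun i => sigma i * chem c0 sigma U 0 i - sigma i * chem c0 sigma U x1 i)).
        2:{ rewrite !sum_from_minus. ring. }
        apply (sum_from_ge_term 0 N (fun i => sigma i * chem c0 sigma U 0 i - sigma i * chem c0 sigma U x1 i) k).
        - intros i Hi. assert (sigma i * chem c0 sigma U x1 i < sigma i * chem c0 sigma U 0 i).
          { apply term_strict; [apply Hs0; lia| lra | apply HDc; [lra|lia] | apply HDc; [lra|lia]]. }
          lra.
        - lia. }
      assert (HdK : dt * beta k * K = Rabs d + 1) by (unfold K; field; split; lra).
      assert (H : dt * beta k * K / dt = (Rabs d + 1) / dt) by (rewrite HdK; reflexivity).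
      assert (H0 : dt * (dF 0 - dF x1) >= Rabs d + 1).
      { rewrite H in Hsum. apply Rle_ge.
        replace (Rabs d + 1) with (dt * ((Rabs d + 1) / dt)) by (field; lra).
        apply Rmult_le_compat_l; lra. }
      assert (H1 : S x1 < d) by (apply (S_neg a b F dF S); auto; lra).
      assert (H2 : ln ((x1 - 0) / E + 1) < 0).
      { assert (0 < (x1 - 0) / E + 1).
        { replace ((x1 - 0) / E + 1) with ((x1 + E) / E) by (field; lra).
          apply Rdiv_lt_0_compat; lra. }
        assert ((x1 - 0) / E < 0).
        { replace ((x1 - 0)/E) with (- ((0 - x1) / E)) by (field; lra).
          assert (0 < (0 - x1) / E) by (apply Rdiv_lt_0_compat; lra). lra. }
        assert (Hl1 : ln ((x1 - 0) / E + 1) < ln 1) by (apply ln_increasing; lra).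
        rewrite ln_1 in Hl1. lra. }
      unfold G. rewrite Hgam. fold d. change (dF 0) with d in H0. lra. }
  destruct Hx1 as [x1 [Hx1 G1]]. destruct Hx2 as [x2 [Hx2 G2]].
  destruct (abstract_main a b J G HJ HGc HGm x1 x2 Hx1 Hx2 G1 G2) as [Ex [Un [Mn Cv]]].
  split.
  - destruct Ex as [R1 [HR1 GR1]]. exists R1. split; [|split; [|split]].
    + apply Hsch; auto.
    + intros R' HR'. apply Hsch in HR'. destruct HR'. apply Un; auto.
    + apply HD; auto.
    + intros R HR Hne. apply HD in HR. apply Mn; auto.
  - intros x y t Hx Hy Hne Ht. apply HD in Hx. apply HD in Hy. apply Cv; auto.
Qed.
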